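(* Let $n>(p+s)^4$ be an integer. Then $\rho_1 := \sum_{k=1}^{n} r_{1,k}=0$.
   Context: Let $p\geqslant 5$ be a prime and $s$ a positive integer. Write $v_p$ for the $p$-adic valuation and $(\alpha)_k=\alpha(\alpha+1)\cdots(\alpha+k-1)$. Put $N_0=v_p(p-1+s)$ and $M_0=p^{2+N_0}s-1$. For an integer $n>(p+s)^4$ let \[R_n(t)=p^{pn}\, n!^s\, t^{M_0}\,\frac{\prod_{j=1}^{p-1}(t+\frac{j}{p})_n}{(t)_{n+1}^{p-1+s}}\in\mathbb{Q}(t),\] with partial fraction decomposition $R_n(t)=\sum_{i=1}^{p-1+s}\sum_{k=1}^{n} r_{i,k}(t+k)^{-i}$, $r_{i,k}\in\mathbb{Q}$. *)

(* Defs.v *)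
From mathcomp Require Import all_boot all_order all_algebra.
Set Implicit Arguments. Unset Strict Implicit. Unset Printing Implicit Defensive.
Import Order.TTheory GRing.Theory Num.Theory.
Local Open Scope ring_scope.

Definition poch (a : rat) (k : nat) : rat := \prod_(i < k) (a + i%:R).

Definition N0 (p s : nat) : nat := logn p (p - 1 + s).

Definition M0 (p s : nat) : nat := (p ^ (2 + N0 p s) * s - 1)%N.

Definition Rn (p s n : nat) (t : rat) : rat :=
  (p ^ (p * n))%:R * (n`!)%:R ^+ s * t ^+ M0 p s
  * (\prod_(1 <= j < p) poch (t + j%:R / p%:R) n)
  / (poch t n.+1) ^+ (p - 1 + s).

(* Main.v *)
Require Import Defs.
From mathcomp Require Import all_boot all_order all_algebra.
From mathcomp Require Import ring lra zify.
Import Order.TTheory GRing.Theory Num.Theory.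
Local Open Scope ring_scope.


Lemma expsN (p s n : nat) : prime p -> (5 <= p)%N -> (0 < s)%N -> ((p + s) ^ 4 < n)%N ->
  (M0 p s + 2 <= (p - 1 + s) + s * n)%N.
Proof.
move=> pp p5 s0 hn.
have h1 : (p ^ N0 p s <= p - 1 + s)%N.
  apply: dvdn_leq; first lia.
  exact: pfactor_dvdnn.
rewrite /M0 expnD.
set q := (p ^ N0 p s)%N in h1 *.
have e4 : ((p + s) ^ 4 = (p+s)*(p+s)*((p+s)*(p+s)))%N.
  by rewrite !expnS expn0; lia.
rewrite e4 in hn.
have hp2 : (p ^ 2 = p * p)%N by rewrite !expnS expn0; lia.
rewrite hp2.
have h2a : (p * p * q <= p * p * (p + s))%N by apply: leq_mul => //; lia.
have h2b : (p * p * (p + s) <= (p+s)*(p+s)*((p+s)*(p+s)))%N by nia.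
have h2 : (p * p * q < n)%N by lia.
have h3 : (p * p * q * s <= (n - 1) * s)%N by apply: leq_mul => //; lia.
nia.
Qed.

Lemma poch_ge0 (a : rat) k : 0 <= a -> 0 <= poch a k.
Proof. move=> a0; rewrite /poch; apply: prodr_ge0 => i _; rewrite addr_ge0 //. Qed.

Lemma pochS (t : rat) n : poch t n.+1 = t * poch (t + 1) n.
Proof.
rewrite /poch big_ord_recl /= addr0; congr (_ * _).
by apply: eq_bigr => i _; rewrite /bump /= add1n -addn1 natrD addrA [_ + 1]addrC addrA [1 + t]addrC.
Qed.

Lemma poch_lb (t : rat) n : 0 <= t -> t ^+ n <= poch (t + 1) n.
Proof.
move=> t0; rewrite /poch.
have -> : t ^+ n = \prod_(i < n) t by rewrite prodr_const card_ord.
apply: ler_prod => i _; rewrite t0 /=; rewrite -addrA lerDl; apply: addr_ge0 => //.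
Qed.

Lemma poch_mono (a b : rat) n : 0 <= a -> a <= b -> poch a n <= poch b n.
Proof.
move=> a0 ab; rewrite /poch; apply: ler_prod => i _.
rewrite addr_ge0 //= lerD2r //.
Qed.

Lemma Rbound (p s n : nat) (t : rat) : prime p -> (5 <= p)%N -> (0 < s)%N -> ((p + s) ^ 4 < n)%N ->
  1 <= t -> 0 <= t ^+ 2 * Rn p s n t <= (p ^ (p * n))%:R * (n`!)%:R ^+ s.
Proof.
move=> pp p5 s0 hn t1.
have t0 : 0 < t by apply: (lt_le_trans ltr01 t1).
have hM := expsN _ _ _ pp p5 s0 hn.
set C := (p ^ (p * n))%:R * (n`!)%:R ^+ s : rat.
have C0 : 0 <= C by rewrite /C mulr_ge0 // exprn_ge0.
set P := \prod_(1 <= j < p) poch (t + j%:R / p%:R) n.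
set Q := poch (t + 1) n.
set m := (p - 1 + s)%N.
have Q0 : 0 < Q.
  apply: lt_le_trans (poch_lb t n (ltW t0)); exact: exprn_gt0.
have tj : forall j : nat, 0 <= t + j%:R / p%:R.
  by move=> j; apply: addr_ge0; [exact: ltW | exact: divr_ge0].
have P0 : 0 <= P.
  rewrite /P; apply: prodr_ge0 => j _; apply: poch_ge0; exact: tj.
have PQ : P <= Q ^+ (p - 1).
  rewrite /P -prodr_const_nat !big_seq; apply: ler_prod => j; rewrite mem_index_iota => /andP[_ jp].
  rewrite poch_ge0 /=; last exact: tj.
  apply: poch_mono; first exact: tj.
  rewrite lerD2l ler_pdivrMr ?ltr0n ?prime_gt0 // mul1r ler_nat ltnW //.
have -> : t ^+ 2 * Rn p s n t = C * t ^+ (M0 p s + 2) * P / (t * Q) ^+ m.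
  rewrite /Rn -pochS -/P -/C -/m exprD; rewrite !mulrA; congr (_ / _); rewrite /C; ring.
have D0 : 0 < (t * Q) ^+ m by rewrite exprn_gt0 // mulr_gt0.
apply/andP; split.
  apply: divr_ge0; last exact: ltW.
  by apply: mulr_ge0 => //; apply: mulr_ge0 => //; apply: exprn_ge0; exact: ltW.
rewrite ler_pdivrMr //.
have -> : C * (t * Q) ^+ m = C * (t ^+ m * Q ^+ s) * Q ^+ (p - 1).
  by rewrite exprMn [Q ^+ m]exprD /C; ring.
apply: ler_pM; first by rewrite mulr_ge0 // exprn_ge0 // ltW.
- by [].
- apply: ler_pM => //; first by rewrite exprn_ge0 // ltW.
  apply: le_trans (ler_weXn2l t1 hM) _.
  have tge : 0 <= t by exact: ltW.
  rewrite exprD; apply: ler_pM; [exact: exprn_ge0 | exact: exprn_ge0 | by [] |].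
  rewrite mulnC exprM; apply: lerXn2r; rewrite ?nnegrE; [exact: exprn_ge0 | exact: ltW |].
  exact: poch_lb _ _ tge.
- by [].
Qed.

Lemma term1 (t r : rat) (k : nat) : 0 < t ->
  `|t ^+ 2 * (r / (t + k%:R) ^+ 1) - t * r| <= `|r| * k%:R.
Proof.
move=> t0.
have tk : 0 < t + k%:R by rewrite ltr_wpDr.
have -> : t ^+ 2 * (r / (t + k%:R) ^+ 1) - t * r = - (r * k%:R) * (t / (t + k%:R)).
  by field; rewrite gt_eqF.
rewrite normrM normrN normrM normr_nat ler_piMr //.
  by rewrite mulr_ge0.
rewrite ger0_norm; last by apply: divr_ge0; apply: ltW.
rewrite ler_pdivrMr // mul1r lerDl //.
Qed.

Lemma term2 (t r : rat) (k i : nat) : 1 <= t -> (1 <= k)%N -> (2 <= i)%N ->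
  `|t ^+ 2 * (r / (t + k%:R) ^+ i)| <= `|r| * k%:R.
Proof.
move=> t1 k1 i2.
have t0 : 0 < t by apply: (lt_le_trans ltr01 t1).
have tk1 : 1 <= t + k%:R by rewrite (le_trans t1) // lerDl.
have tk : 0 < t + k%:R by apply: (lt_le_trans ltr01 tk1).
rewrite mulrCA normrM ler_pM //.
  apply: (@le_trans _ _ 1); last by rewrite (ler_nat _ 1 k).
  rewrite ger0_norm; last by apply: divr_ge0; apply: exprn_ge0; apply: ltW.
  rewrite ler_pdivrMr ?exprn_gt0 // mul1r.
  apply: le_trans (ler_weXn2l tk1 i2).
  apply: lerXn2r; rewrite ?nnegrE; [exact: ltW | exact: ltW | by rewrite lerDl].
Qed.

Lemma Sbound (m n : nat) (r : nat -> nat -> rat) (t : rat) : (0 < m)%N -> 1 <= t ->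
  `|t ^+ 2 * (\sum_(1 <= i < m.+1) \sum_(1 <= k < n.+1) r i k / (t + k%:R) ^+ i)
    - t * \sum_(1 <= k < n.+1) r 1%N k|
  <= \sum_(1 <= i < m.+1) \sum_(1 <= k < n.+1) `|r i k| * k%:R.
Proof.
move=> m0 t1.
have t0 : 0 < t by apply: (lt_le_trans ltr01 t1).
rewrite !(big_ltn (m := 1%N) (n := m.+1)) //.
rewrite mulrDr addrAC !mulr_sumr -sumrB.
apply: le_trans (ler_normD _ _) _; apply: lerD.
  apply: le_trans (ler_norm_sum _ _ _) _; apply: ler_sum => k _; exact: term1.
apply: le_trans (ler_norm_sum _ _ _) _; rewrite big_nat.
rewrite [X in X <= _]big_nat.
apply: ler_sum => i /andP[i2 _].
rewrite mulr_sumr; apply: le_trans (ler_norm_sum _ _ _) _.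
rewrite ?[X in X <= _]big_nat ?[X in _ <= X]big_nat; apply: ler_sum => k /andP[k1 _].
exact: term2.
Qed.

Theorem lemma4p1 (p s n : nat) (r : nat -> nat -> rat) :
  prime p -> (5 <= p)%N -> (0 < s)%N -> ((p + s) ^ 4 < n)%N ->
  (forall t : rat, (forall k : nat, (k <= n)%N -> t + k%:R != 0) ->
     Rn p s n t =
     \sum_(1 <= i < (p - 1 + s).+1) \sum_(1 <= k < n.+1) r i k / (t + k%:R) ^+ i) ->
  \sum_(1 <= k < n.+1) r 1%N k = 0.
Proof.
move=> pp p5 s0 hn hR.
set rho := \sum_(1 <= k < n.+1) r 1%N k.
set C := (p ^ (p * n))%:R * (n`!)%:R ^+ s : rat.
set K := \sum_(1 <= i < (p - 1 + s).+1) \sum_(1 <= k < n.+1) `|r i k| * k%:R.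
have key : forall t : rat, 1 <= t -> t * `|rho| <= C + K.
  move=> t t1.
  have t0 : 0 < t by apply: (lt_le_trans ltr01 t1).
  have hnz : forall k : nat, (k <= n)%N -> t + k%:R != 0.
    by move=> k _; rewrite gt_eqF // ltr_wpDr.
  have hRb := Rbound p s n t pp p5 s0 hn t1.
  have hSb := Sbound (p - 1 + s) n r t (ltac:(lia)) t1.
  rewrite -(hR t hnz) in hSb.
  have -> : t * `|rho| = `|t ^+ 2 * Rn p s n t - (t ^+ 2 * Rn p s n t - t * rho)|.
    by rewrite opprB addrC subrK normrM ger0_norm // ltW.
  apply: le_trans (ler_normB _ _) _.
  apply: lerD => //.
  case/andP: hRb => h0 h1; by rewrite ger0_norm.
apply/eqP; apply/negP => /negP rho0.
have ar : 0 < `|rho| by rewrite normr_gt0.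
have K0 : 0 <= K.
  apply: sumr_ge0 => i _; apply: sumr_ge0 => k _; apply: mulr_ge0 => //.
have C0 : 0 <= C by rewrite /C mulr_ge0 // exprn_ge0.
have t1 : 1 <= (C + K + 1) / `|rho| + 1.
  by rewrite lerDr; apply: divr_ge0; [rewrite addr_ge0 // addr_ge0 | exact: ltW].
have h := key _ t1.
move: h; rewrite mulrDl mul1r divfK ?gt_eqF // => h.
have : C + K + 1 <= C + K by apply: le_trans h; rewrite lerDl ltW.
by rewrite -{2}[C + K]addr0 lerD2l ler10.
Qed.
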